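(* For every decorated tree $\mathcal{T}$, the set $\mathrm{Cent}(\mathcal{T})$ of central elements of $\mathcal{T}$ is connected.
   Context: A graph is a pair $(X_0,X_1)$ of finite sets such that each element of $X_1$ (an edge) is a $2$-element subset of $X_0$; elements of $X_0$ are cells. A path is a tuple $(x_0,\dots,x_n)$ ($n\ge0$) of cells with $\{x_i,x_{i+1}\}$ an edge for each $i<n$, these edges pairwise distinct; a cell/edge is in the path if it is some $x_i$ / some $\{x_i,x_{i+1}\}$. The graph is a tree if any two cells $x,y$ are joined by a unique path $\gamma_{x,y}$. A decorated tree is $(V,A,E,f,q)$ with $V$ (vertices), $A$ (arrows) finite disjoint sets, $(V\cup A,E)$ a tree, every arrow contained in exactly one edge, $f:A\to\mathbb{Z}$, $q(e,x)\in\mathbb{Z}$ for each $e\in E$, $x\in e$, with $q(e,\alpha)=1$ for $\alpha\in A$, and for each $v\in V$ and distinct edges $e,e'\ni v$, $\gcd(q(e,v),q(e',v))=1$. A path $(w_1,\dots,w_m)$ with $m\ge2$ satisfies $(+)$ if every edge $e\ni w_m$ other than $\{w_{m-1},w_m\}$ has $q(e,w_m)\ge1$ and at most one such edge has $q(e,w_m)>1$. An element $x\in V\cup A$ is central if $\gamma_{x,v}$ satisfies $(+)$ for every $v\in V\setminus\{x\}$; $\mathrm{Cent}(\mathcal{T})$ is the set of central elements. A subset $S\subseteq V\cup A$ is connected if every path $(x_0,\dots,x_n)$ with $x_0,x_n\in S$ has $x_i\in S$ for all $0<i<n$. *)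

(* Defs.v *)
From mathcomp Require Import all_boot all_order all_algebra.
Set Implicit Arguments. Unset Strict Implicit. Unset Printing Implicit Defensive.
Import GRing.Theory Num.Theory.

(* Cells are the elements of a finite type T; the vertex set is V : {set T}
   and the arrow set is its complement ~: V (so V, A are disjoint and
   V u A = X_0 = all cells). *)

Section Decorated.
Variable T : finType.

Definition is_graph (E : {set {set T}}) : Prop :=
  forall e, e \in E -> #|e| = 2.

Definition path_edges (s : seq T) : seq {set T} :=
  [seq [set p.1; p.2] | p <- zip s (behead s)].

Definition is_path (E : {set {set T}}) (s : seq T) : Prop :=
  (0 < size s)%N /\ (forall e, e \in path_edges s -> e \in E)
  /\ uniq (path_edges s).

Definition path_from_to (E : {set {set T}}) (x y : T) (s : seq T) : Prop :=
  is_path E s /\ head x s = x /\ last x s = y.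

Definition is_tree (E : {set {set T}}) : Prop :=
  is_graph E /\ forall x y : T, exists! s, path_from_to E x y s.

Definition decorated_tree (V : {set T}) (E : {set {set T}})
    (f : T -> int) (q : {set T} -> T -> int) : Prop :=
  is_tree E /\
  (forall a, a \notin V -> #|[set e in E | a \in e]| = 1%N) /\
  (forall e a, e \in E -> a \in e -> a \notin V -> q e a = 1%R) /\
  (forall v e e', v \in V -> e \in E -> e' \in E -> v \in e -> v \in e' ->
       e != e' -> gcdz (q e v) (q e' v) = 1%N).

Definition plus_cond (E : {set {set T}}) (q : {set T} -> T -> int)
    (s : seq T) : Prop :=
  match rev s with
  | wm :: wm1 :: _ =>
      (forall e, e \in E -> wm \in e -> e != [set wm1; wm] -> (1 <= q e wm)%R) /\
      (forall e e', e \in E -> e' \in E -> wm \in e -> wm \in e' ->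
         e != [set wm1; wm] -> e' != [set wm1; wm] ->
         (1 < q e wm)%R -> (1 < q e' wm)%R -> e = e')
  | _ => False
  end.

(* x is central: gamma_{x,v} satisfies (+) for every v in V \ {x};
   in a tree gamma_{x,v} is the unique path from x to v. *)
Definition central (V : {set T}) (E : {set {set T}})
    (q : {set T} -> T -> int) (x : T) : Prop :=
  forall v, v \in V -> v != x ->
    forall s, path_from_to E x v s -> plus_cond E q s.

Definition connected_cells (E : {set {set T}}) (S : T -> Prop) : Prop :=
  forall x y s, path_from_to E x y s -> S x -> S y ->
    forall z, z \in s -> S z.

End Decorated.

(* Main.v *)
Require Import Defs.
From mathcomp Require Import all_boot all_order all_algebra.
Set Implicit Arguments. Unset Strict Implicit.

Section Aux.
Variable T : finType.
Variable E : {set {set T}}.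
Variable q : {set T} -> T -> int.

Definition rE : rel T := fun a b => [set a; b] \in E.

Lemma pe_cons2 (a b : T) l : path_edges (a :: b :: l) = [set a; b] :: path_edges (b :: l).
Proof. by []. Qed.

Lemma pe_sub (s : seq T) e x : e \in path_edges s -> x \in e -> x \in s.
Proof.
elim: s => [|a l IH] //; case: l IH => [|b l] IH //.
rewrite pe_cons2 inE => /orP [/eqP -> | He] Hx.
  by move: Hx; rewrite !inE => /orP [->|->] //; rewrite orbT.
by rewrite inE (IH He Hx) orbT.
Qed.

Lemma uniq_pe (s : seq T) : uniq s -> uniq (path_edges s).
Proof.
elim: s => [|a l IH] //; case: l IH => [|b l] IH //.
rewrite pe_cons2 /= => /andP [Ha Hu]; rewrite IH // andbT.
apply/negP => He.
have H := @pe_sub (b :: l) _ a He; move: H; rewrite !inE eqxx /= => H.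
by move: Ha; rewrite inE H.
Qed.

Lemma path_E a l : (forall e, e \in path_edges (a :: l) -> e \in E) <-> path rE a l.
Proof.
elim: l a => [|b l IH] a /=; first by split.
split.
  move=> H; apply/andP; split; first by apply: H; rewrite pe_cons2 inE eqxx.
  by apply/(IH b) => e He; apply: H; rewrite pe_cons2 inE He orbT.
move=> /andP [Hab H] e; rewrite pe_cons2 inE => /orP [/eqP -> //|]; exact: (proj2 (IH b) H).
Qed.

Lemma pe_cat (g s : seq T) : s != [::] -> exists pre, path_edges (g ++ s) = pre ++ path_edges s.
Proof.
move=> Hs; elim: g => [|a g [pre IH]]; first by exists [::].
case E1: (g ++ s) => [|b l]; first by have := congr1 size E1; rewrite size_cat; case: s Hs {IH E1} => [//|c s'] _; rewrite /= addnS.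
rewrite /= E1 pe_cons2 -E1 IH; by exists ([set a; b] :: pre).
Qed.

Lemma plus_cat (g s : seq T) : 1 < size s -> plus_cond E q (g ++ s) -> plus_cond E q s.
Proof.
rewrite -size_rev /plus_cond rev_cat.
by case: (rev s) => [|a [|b l]].
Qed.

Lemma tree_uniq x y s1 s2 : is_tree E -> path_from_to E x y s1 -> path_from_to E x y s2 -> s1 = s2.
Proof.
move=> [_ H] H1 H2; have [s0 [_ Hu]] := H x y.
by rewrite -(Hu s1) // -(Hu s2).
Qed.

Lemma path_single x : path_from_to E x x [:: x].
Proof. by split=> //; split. Qed.

Lemma pft_cons x y g : path_from_to E x y g -> exists p, g = x :: p /\ path rE x p /\ last x p = y.
Proof.
case: g => [[[]] //|a p] [[_ [He _]] [/= Ha Hl]]; subst a.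
by exists p; split=> //; split=> //; apply/path_E.
Qed.

Lemma key x y v s z gx gy : is_tree E -> path_from_to E x y s -> z \in s ->
  path_from_to E x v gx -> path_from_to E y v gy -> (z \in gx) || (z \in gy).
Proof.
move=> Ht Hs Hz Hgx Hgy.
have [p1 [-> [Hp1 Hl1]]] := pft_cons Hgx.
have [p2 [-> [Hp2 Hl2]]] := pft_cons Hgy.
set w := p1 ++ rev (belast y p2).
have Hw : path rE x w.
  rewrite /w cat_path Hp1 /= Hl1 -Hl2 rev_path.
  rewrite (@eq_path _ _ rE) // => a b; by rewrite /rE setUC.
have Hlw : last x w = y.
  rewrite /w last_cat Hl1 -Hl2; case: (p2) => [|b p2'] //=.
  by rewrite rev_cons last_rcons.
case: (shortenP Hw) Hlw => p' Hp' Hu Hsub Hl.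
have Hs' : path_from_to E x y (x :: p').
  split; last by split.
  split=> //; split; first by apply/path_E.
  exact: uniq_pe.
have Heq := tree_uniq Ht Hs Hs'; subst s.
move: Hz; rewrite inE => /orP [/eqP ->|/Hsub]; first by rewrite inE eqxx.
rewrite /w mem_cat => /orP [H|]; first by rewrite inE H orbT.
by rewrite mem_rev => /mem_belast ->; rewrite orbT.
Qed.

Lemma sub_central V x v z gx t : is_tree E -> central V E q x ->
  path_from_to E x v gx -> v \in V -> v != z -> z \in gx ->
  path_from_to E z v t -> plus_cond E q t.
Proof.
move=> Ht Hx Hgx Hv Hvz Hz Htp.
have Hvx : v != x.
  apply/negP => /eqP Evx; subst v.
  have := tree_uniq Ht Hgx (path_single x) => Eg; subst gx.
  by move: Hz Hvz; rewrite inE => /eqP ->; rewrite eqxx.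
have Hpg := Hx v Hv Hvx gx Hgx.
set i := index z gx.
have Hi : i < size gx by rewrite index_mem.
have Hsplit : gx = take i gx ++ z :: drop i.+1 gx.
  by rewrite -{1}(cat_take_drop i gx) (drop_nth z Hi) nth_index.
set g2 := drop i.+1 gx.
have Hlast : last z g2 = v.
  by case: Hgx => _ [_]; rewrite Hsplit last_cat.
have Hu : path_from_to E z v (z :: g2).
  split; last by split.
  have [pre Hpre] := pe_cat (take i gx) (s := z :: g2) isT.
  case: Hgx => [[_ [HE Huq]] _].
  rewrite -Hsplit in Hpre.
  split=> //; split.
    by move=> e He; apply: HE; rewrite Hpre mem_cat He orbT.
  by move: Huq; rewrite Hpre cat_uniq => /and3P [].
have -> := tree_uniq Ht Htp Hu.
apply: (@plus_cat (take i gx)); last by rewrite -Hsplit.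
case E2: g2 Hlast => [|c g2'] //= Hl.
by move: Hvz; rewrite -Hl eqxx.
Qed.

End Aux.

Theorem lemma5p3 (T : finType) (V : {set T}) (E : {set {set T}})
    (f : T -> int) (q : {set T} -> T -> int) :
  decorated_tree V E f q ->
  connected_cells E (central V E q).
Proof.
move=> [Ht _] x y s Hs Hx Hy z Hz v Hv Hvz t Htp.
have [Hg Hex] := Ht.
have [gx [Hgx _]] := Hex x v.
have [gy [Hgy _]] := Hex y v.
case/orP: (key Ht Hs Hz Hgx Hgy) => H.
  exact: (sub_central Ht Hx Hgx Hv Hvz H Htp).
exact: (sub_central Ht Hy Hgy Hv Hvz H Htp).
Qed.
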